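(* Let $r\in(0,1)$ and $\lambda(r)=\ln\frac{1+r}{1-r}$. Let $\overline{S}_{\lambda(r)}=\{z\in\mathbb{S}: d_{\mathbb{S}}(z,0)\leqslant\lambda(r)\}$. Then $$\overline{S}_{\lambda(r)}\subset\left[-\frac{4}{\pi}\arctan r,\frac{4}{\pi}\arctan r\right]\times\left[-\frac{2}{\pi}\lambda(r),\frac{2}{\pi}\lambda(r)\right]$$ (as a subset of $\mathbb{C}\cong\mathbb{R}^2$, real part times imaginary part), and moreover $$\{\operatorname{Re} z : z\in \overline{S}_{\lambda(r)}\}=\left[-\frac{4}{\pi}\arctan r,\frac{4}{\pi}\arctan r\right].$$
   Context: $\mathbb{S}=\{z\in\mathbb{C}:-1<\operatorname{Re} z<1\}$. The hyperbolic density of $\mathbb{S}$ is $\rho_{\mathbb{S}}(z)=\frac{\pi}{2}\big/\cos\left(\frac{\pi}{2}\operatorname{Re} z\right)$ and $d_{\mathbb{S}}(z_1,z_2)=\inf_\gamma\int_\gamma\rho_{\mathbb{S}}(z)|dz|$ over $C^1$ curves $\gamma$ in $\mathbb{S}$ joining $z_1$ to $z_2$ (this is the hyperbolic distance of $\mathbb{S}$ transported from the unit disc $\mathbb{U}$, whose density is $\frac{2}{1-|z|^2}$, by the conformal map $z\mapsto\tan(\pi z/4)$ from $\mathbb{S}$ onto $\mathbb{U}$). *)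

(* Defs.v *)
From Stdlib Require Import Reals.
From Coquelicot Require Import Coquelicot.
Open Scope R_scope.

Definition ReP (z : R * R) : R := fst z.
Definition ImP (z : R * R) : R := snd z.

Definition in_strip (z : R * R) : Prop := -1 < ReP z < 1.

Definition rho_S (z : R * R) : R := (PI / 2) / cos (PI / 2 * ReP z).

(* A C^1 curve gamma = (gx, gy) : [0,1] -> S from z1 to z2.
   (Differentiability at each t in [0,1] is two-sided; any C^1 curve on [0,1]
   extends to such a curve, so the infimum below is unaffected.) *)
Definition admissible_curve (gx gy : R -> R) (z1 z2 : R * R) : Prop :=
  (forall t, 0 <= t <= 1 ->
     ex_derive gx t /\ ex_derive gy t /\
     continuous (Derive gx) t /\ continuous (Derive gy) t /\
     in_strip (gx t, gy t)) /\
  (gx 0, gy 0) = z1 /\ (gx 1, gy 1) = z2.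

Definition hyp_length (gx gy : R -> R) : R :=
  RInt (fun t => rho_S (gx t, gy t) *
                 sqrt (Derive gx t ^ 2 + Derive gy t ^ 2)) 0 1.

Definition d_S (z1 z2 : R * R) : Rbar :=
  Glb_Rbar (fun L => exists gx gy, admissible_curve gx gy z1 z2 /\ L = hyp_length gx gy).

Definition lambda (r : R) : R := ln ((1 + r) / (1 - r)).

Definition closed_disc_S (rad : R) (z : R * R) : Prop :=
  in_strip z /\ Rbar_le (d_S z (0, 0)) (Finite rad).

(* Main.v *)
Require Import Defs.
From Stdlib Require Import Reals Lra Psatz.
From Coquelicot Require Import Coquelicot.
Open Scope R_scope.

Definition H (x : R) : R := ln ((1 + sin (PI/2*x)) / cos (PI/2*x)).
Definition rhof (y : R) : R := PI/2 / cos (PI/2*y).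

Lemma cos_pos (x : R) : -1 < x < 1 -> 0 < cos (PI/2*x).
Proof. intros. pose proof PI_RGT_0. apply cos_gt_0; nra. Qed.

Lemma H_deriv (x : R) : -1 < x < 1 -> is_derive H x (rhof x).
Proof.
  intros hx. pose proof (cos_pos x hx) as hc.
  assert (hs : -1 <= sin (PI/2*x)) by apply SIN_bound.
  assert (hs' : 0 < 1 + sin (PI/2*x)).
  { destruct (Req_dec (sin (PI/2*x)) (-1)) as [e|n]; [|lra].
    pose proof (sin2_cos2 (PI/2*x)). rewrite e in H0. unfold Rsqr in H0. nra. }
  unfold H, rhof. auto_derive.
  - repeat split; try lra. apply Rdiv_lt_0_compat; lra.
  - pose proof (sin2_cos2 (PI/2*x)). unfold Rsqr in H0. field_simplify; try lra.
    set (s := sin (PI/2*x)) in *. set (c := cos (PI/2*x)) in *.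
    replace (PI*c^2 + PI*s^2 + PI*s) with (PI*(s*s+c*c) + PI*s) by ring. rewrite H0.
    field. split; nra.
Qed.

Lemma cont_smooth (g h : R -> R) t : continuous h t -> ex_derive g (h t) -> continuous (fun s => g (h s)) t.
Proof. intros. apply continuous_comp; auto. now apply (ex_derive_continuous (K:=R_AbsRing) (V:=R_NormedModule) g). Qed.

Lemma intbound (f F P : R -> R) :
 (forall t, 0<=t<=1 -> continuous f t) ->
 (forall t, 0<=t<=1 -> is_derive P t (F t)) ->
 (forall t, 0<=t<=1 -> continuous F t) ->
 (forall t, 0<t<1 -> Rabs (F t) <= f t) ->
 Rabs (P 1 - P 0) <= RInt f 0 1.
Proof.
  intros hf hP hF hb.
  assert (hm : Rmin 0 1 = 0) by (apply Rmin_left; lra).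
  assert (hM : Rmax 0 1 = 1) by (apply Rmax_right; lra).
  assert (hI : is_RInt F 0 1 (minus (P 1) (P 0))).
  { apply (is_RInt_derive (V:=R_CompleteNormedModule)); rewrite hm, hM; auto. }
  assert (ef : ex_RInt f 0 1) by (apply (ex_RInt_continuous (V:=R_CompleteNormedModule)); rewrite hm, hM; auto).
  assert (e1 : RInt F 0 1 = P 1 - P 0) by (apply (is_RInt_unique (V:=R_CompleteNormedModule)); exact hI).
  assert (e2 : RInt (fun t => - F t) 0 1 = - (P 1 - P 0)).
  { apply (is_RInt_unique (V:=R_CompleteNormedModule)). apply (is_RInt_opp (V:=R_CompleteNormedModule) _ _ _ _ hI). }
  assert (l1 : RInt F 0 1 <= RInt f 0 1).
  { apply RInt_le; try lra; auto. exists (minus (P 1) (P 0)); exact hI.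
    intros t ht. specialize (hb t ht). unfold Rabs in hb. destruct Rcase_abs; lra. }
  assert (l2 : RInt (fun t => - F t) 0 1 <= RInt f 0 1).
  { apply RInt_le; try lra; auto. exists (opp (minus (P 1) (P 0))); apply (is_RInt_opp (V:=R_CompleteNormedModule) _ _ _ _ hI).
    intros t ht. specialize (hb t ht). unfold Rabs in hb. destruct Rcase_abs; lra. }
  unfold Rabs; destruct Rcase_abs; lra.
Qed.

Lemma sqrt_ge_abs (a b : R) : Rabs a <= sqrt (a^2 + b^2).
Proof. rewrite <- sqrt_Rsqr_abs. apply sqrt_le_1_alt. unfold Rsqr. nra. Qed.

Lemma H0 : H 0 = 0.
Proof. unfold H. rewrite Rmult_0_r, sin_0, cos_0. replace ((1+0)/1) with 1 by field. apply ln_1. Qed.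

Lemma rhof_ge (y : R) : -1 < y < 1 -> PI/2 <= rhof y.
Proof.
  intros hy. pose proof (cos_pos y hy). pose proof (COS_bound (PI/2*y)). pose proof PI2_RGT_0.
  unfold rhof. unfold Rdiv at 2. rewrite <- (Rmult_1_r (PI/2)) at 1. apply Rmult_le_compat_l; try lra.
  rewrite <- Rinv_1. apply Rinv_le_contravar; lra.
Qed.

Lemma lower gx gy z : admissible_curve gx gy z (0,0) ->
  Rabs (H (ReP z)) <= hyp_length gx gy /\ PI/2 * Rabs (ImP z) <= hyp_length gx gy.
Proof.
  intros [hc [h0 h1]]. injection h1 as e1x e1y. subst z. unfold ReP, ImP; simpl.
  pose proof PI2_RGT_0 as hpi.
  assert (hcont : forall t, 0<=t<=1 -> continuous (fun t => rho_S (gx t, gy t) * sqrt (Derive gx t ^ 2 + Derive gy t ^ 2)) t).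
  { intros t ht. destruct (hc t ht) as [dx [dy [cx [cy st]]]]. unfold in_strip, ReP in st; simpl in st.
    assert (contgx := ex_derive_continuous (K:=R_AbsRing) (V:=R_NormedModule) gx t dx).
    apply (continuous_mult (K:=R_AbsRing) (fun t => rhof (gx t)) (fun t => sqrt (Derive gx t ^ 2 + Derive gy t ^ 2))).
    - apply (cont_smooth rhof gx t contgx). unfold rhof. pose proof (cos_pos _ st). auto_derive. lra.
    - apply continuous_sqrt_comp.
      apply (continuous_plus (V:=R_NormedModule) (fun t => Derive gx t ^2) (fun t => Derive gy t ^2)).
      + apply (cont_smooth (fun y => y^2) (Derive gx)); auto. auto_derive; auto.
      + apply (cont_smooth (fun y => y^2) (Derive gy)); auto. auto_derive; auto. }
  split.
  - assert (B := intbound _ (fun t => rhof (gx t) * Derive gx t) (fun t => H (gx t)) hcont).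
    cbv beta in B. rewrite e1x, H0 in B. rewrite Rminus_0_l, Rabs_Ropp in B. apply B.
    + intros t ht. destruct (hc t ht) as [dx [dy [cx [cy st]]]]. unfold in_strip, ReP in st; simpl in st.
      assert (hd := is_derive_comp H gx t (rhof (gx t)) (Derive gx t) (H_deriv _ st) (Derive_correct _ _ dx)).
      rewrite Rmult_comm. exact hd.
    + intros t ht. destruct (hc t ht) as [dx [dy [cx [cy st]]]]. unfold in_strip, ReP in st; simpl in st.
      assert (contgx := ex_derive_continuous (K:=R_AbsRing) (V:=R_NormedModule) gx t dx).
      apply (continuous_mult (K:=R_AbsRing) (fun t => rhof (gx t)) (Derive gx)); auto.
      apply (cont_smooth rhof gx t contgx). unfold rhof. pose proof (cos_pos _ st). auto_derive. lra.
    + intros t ht. destruct (hc t ltac:(lra)) as [dx [dy [cx [cy st]]]]. unfold in_strip, ReP in st; simpl in st.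
      change (rho_S (gx t, gy t)) with (rhof (gx t)). pose proof (rhof_ge _ st).
      rewrite Rabs_mult, (Rabs_pos_eq (rhof (gx t))) by lra.
      apply Rmult_le_compat_l; [lra|]. apply sqrt_ge_abs.
  - assert (B := intbound _ (fun t => PI/2 * Derive gy t) (fun t => PI/2 * gy t) hcont).
    cbv beta in B. rewrite e1y, Rmult_0_r, Rminus_0_l, Rabs_Ropp, Rabs_mult, (Rabs_pos_eq (PI/2)) in B by lra. apply B.
    + intros t ht. destruct (hc t ht) as [dx [dy [cx [cy st]]]].
      apply is_derive_scal. apply Derive_correct. exact dy.
    + intros t ht. destruct (hc t ht) as [dx [dy [cx [cy st]]]].
      apply (continuous_mult (K:=R_AbsRing) (fun _ => PI/2) (Derive gy)); auto. apply continuous_const.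
    + intros t ht. destruct (hc t ltac:(lra)) as [dx [dy [cx [cy st]]]]. unfold in_strip, ReP in st; simpl in st.
      change (rho_S (gx t, gy t)) with (rhof (gx t)). pose proof (rhof_ge _ st).
      rewrite Rabs_mult, (Rabs_pos_eq (PI/2)) by lra.
      apply Rmult_le_compat; try lra. apply Rabs_pos.
      rewrite Rplus_comm. apply sqrt_ge_abs.
Qed.

Lemma tan_facts (x : R) : -1 < x < 1 ->
  -1 < tan (PI/4*x) < 1 /\ atan (tan (PI/4*x)) = PI/4*x.
Proof.
  intros hx. pose proof PI_RGT_0.
  assert (ha : atan (tan (PI/4*x)) = PI/4*x) by (apply atan_tan; split; nra).
  split; [|exact ha]. set (t := tan (PI/4*x)) in *.
  split.
  - destruct (Rlt_or_le (-1) t) as [h|h]; [exact h|].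
    assert (hq : atan t <= atan (-1)).
    { destruct (Rle_lt_or_eq_dec _ _ h) as [h'|h']. left; now apply atan_increasing. rewrite h'; lra. }
    replace (atan (-1)) with (- atan 1) in hq by (rewrite <- atan_opp; f_equal; ring). rewrite atan_1, ha in hq. nra.
  - destruct (Rlt_or_le t 1) as [h|h]; [exact h|].
    assert (hq : atan 1 <= atan t).
    { destruct (Rle_lt_or_eq_dec _ _ h) as [h'|h']. left; now apply atan_increasing. rewrite h'; lra. }
    rewrite atan_1, ha in hq. nra.
Qed.

Lemma H_tan (x : R) : -1 < x < 1 ->
  H x = ln ((1 + tan (PI/4*x)) / (1 - tan (PI/4*x))).
Proof.
  intros hx. pose proof PI_RGT_0. pose proof (cos_pos x hx) as hc2.
  unfold H. replace (PI/2*x) with (2*(PI/4*x)) in * by field.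
  rewrite sin_2a. rewrite cos_2a in *. unfold tan.
  assert (hc : 0 < cos (PI/4*x)) by (apply cos_gt_0; nra).
  pose proof (sin2_cos2 (PI/4*x)) as e. unfold Rsqr in e.
  set (s := sin (PI/4*x)) in *. set (c := cos (PI/4*x)) in *.
  assert (h1 : 0 < c - s) by nra. assert (h2 : 0 < c + s) by nra.
  f_equal. replace (1 + 2*s*c) with ((c+s)*(c+s)) by nra.
  field. repeat split; lra.
Qed.

Lemma H_odd (x : R) : -1 < x < 1 -> H (-x) = - H x.
Proof.
  intros hx. rewrite H_tan by lra. rewrite (H_tan x hx).
  destruct (tan_facts x hx) as [[t1 t2] _].
  replace (PI/4 * -x) with (-(PI/4*x)) by ring. rewrite tan_neg.
  rewrite <- ln_Rinv by (apply Rdiv_lt_0_compat; lra). f_equal. field. lra.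
Qed.

Lemma H_le (x r : R) : -1 < x < 1 -> 0 < r < 1 ->
  (H x <= lambda r <-> x <= 4/PI*atan r).
Proof.
  intros hx hr. pose proof PI_RGT_0.
  rewrite (H_tan x hx). destruct (tan_facts x hx) as [[t1 t2] ha]. unfold lambda.
  set (t := tan (PI/4*x)) in *.
  assert (key : (1+t)/(1-t) - (1+r)/(1-r) = 2*(t-r)/((1-t)*(1-r))) by (field; lra).
  split.
  - intro hl. assert (htr : t <= r).
    { destruct (Rle_or_lt t r) as [h|h]; [exact h|]. exfalso.
      assert (0 < 2*(t-r)/((1-t)*(1-r))) by (apply Rdiv_lt_0_compat; nra).
      assert (ln ((1+r)/(1-r)) < ln ((1+t)/(1-t))) by (apply ln_increasing; [apply Rdiv_lt_0_compat; lra | lra]).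
      lra. }
    assert (hq : atan t <= atan r).
    { destruct (Rle_lt_or_eq_dec _ _ htr) as [h'|h']. left; now apply atan_increasing. rewrite h'; lra. }
    rewrite ha in hq.
    replace x with (4/PI*(PI/4*x)) by (field; lra). apply Rmult_le_compat_l; [|exact hq].
    apply Rlt_le, Rdiv_lt_0_compat; lra.
  - intro hl. assert (hu : PI/4*x <= atan r).
    { replace (atan r) with (PI/4*(4/PI*atan r)) by (field; lra). apply Rmult_le_compat_l; lra. }
    assert (htr : t <= r).
    { destruct (Rle_or_lt t r) as [h|h]; [exact h|]. exfalso.
      pose proof (atan_increasing _ _ h). lra. }
    apply ln_le. apply Rdiv_lt_0_compat; lra.
    assert (0 <= 2*(r-t)/((1-t)*(1-r))) by (apply Rmult_le_pos; [lra| apply Rlt_le, Rinv_0_lt_compat; nra]).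
    assert (e2 : 2*(t-r)/((1-t)*(1-r)) = - (2*(r-t)/((1-t)*(1-r)))) by (field; lra).
    lra.
Qed.

Lemma x0_lt1 (r : R) : 0 < r < 1 -> 0 < 4/PI*atan r < 1.
Proof.
  intros hr. pose proof PI_RGT_0. pose proof (atan_increasing _ _ (proj2 hr)) as q0.
  pose proof (atan_increasing _ _ (proj1 hr)) as q1. rewrite atan_1 in q0. rewrite atan_0 in q1.
  split. apply Rmult_lt_0_compat; [apply Rdiv_lt_0_compat; lra| lra].
  replace 1 with (4/PI*(PI/4)) by (field; lra). apply Rmult_lt_compat_l; [apply Rdiv_lt_0_compat; lra|lra].
Qed.

Lemma abs_H_le (x r : R) : -1 < x < 1 -> 0 < r < 1 ->
  (Rabs (H x) <= lambda r <-> - (4 / PI) * atan r <= x <= (4 / PI) * atan r).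
Proof.
  intros hx hr. pose proof (H_le x r hx hr) as H0. pose proof (H_le (-x) r ltac:(lra) hr) as H1.
  rewrite H_odd in H1 by lra.
  assert (lam : 0 < lambda r).
  { unfold lambda. rewrite <- ln_1. apply ln_increasing; [lra|].
    apply (Rmult_lt_reg_r (1-r)); [lra|]. field_simplify; lra. }
  split; intro h.
  - assert (a1 : H x <= lambda r) by (unfold Rabs in h; destruct Rcase_abs; lra).
    assert (a2 : - H x <= lambda r) by (unfold Rabs in h; destruct Rcase_abs; lra).
    apply H0 in a1. apply H1 in a2. lra.
  - apply Rabs_le. assert (H x <= lambda r) by (apply H0; lra).
    assert (- H x <= lambda r) by (apply H1; lra). lra.
Qed.

Lemma part1 (r : R) (hr : 0 < r < 1) (z : R * R) : closed_disc_S (lambda r) z ->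
  Rabs (H (ReP z)) <= lambda r /\ PI/2 * Rabs (ImP z) <= lambda r.
Proof.
  intros [hs hd]. unfold d_S in hd.
  destruct (Glb_Rbar_correct (fun L => exists gx gy, admissible_curve gx gy z (0,0) /\ L = hyp_length gx gy)) as [_ hg].
  split.
  - assert (hb : Rbar_le (Rabs (H (ReP z))) (Glb_Rbar (fun L => exists gx gy, admissible_curve gx gy z (0,0) /\ L = hyp_length gx gy))).
    { apply hg. intros L [gx [gy [ha e]]]. subst L. simpl. apply (lower gx gy z ha). }
    exact (Rbar_le_trans _ _ (Finite (lambda r)) hb hd).
  - assert (hb : Rbar_le (PI/2 * Rabs (ImP z)) (Glb_Rbar (fun L => exists gx gy, admissible_curve gx gy z (0,0) /\ L = hyp_length gx gy))).
    { apply hg. intros L [gx [gy [ha e]]]. subst L. simpl. apply (lower gx gy z ha). }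
    exact (Rbar_le_trans _ _ (Finite (lambda r)) hb hd).
Qed.

Lemma Dline (a t : R) : Derive (fun t => a*(1-t)) t = -a.
Proof. apply is_derive_unique. auto_derive; auto. ring. Qed.

Lemma line_length (a : R) : -1 < a < 1 ->
  admissible_curve (fun t => a*(1-t)) (fun _ => 0) (a,0) (0,0) /\
  hyp_length (fun t => a*(1-t)) (fun _ => 0) <= Rabs (H a).
Proof.
  intros ha.
  assert (hst : forall t, 0 <= t <= 1 -> -1 < a*(1-t) < 1) by (intros; split; nra).
  split.
  - split; [|split; f_equal; ring].
    intros t ht. repeat split.
    + auto_derive; auto.
    + apply ex_derive_const.
    + apply (continuous_ext (fun _ => -a)). intros; now rewrite Dline. apply continuous_const.
    + apply (continuous_ext (fun _ => 0)). intros; now rewrite Derive_const. apply continuous_const.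
    + unfold ReP; simpl. apply hst; auto.
    + unfold ReP; simpl. apply hst; auto.
  - assert (hc : exists c, (c = 1 \/ c = -1) /\ c * (-a) = Rabs a).
    { unfold Rabs; destruct Rcase_abs. exists 1; split; [left|]; lra. exists (-1); split; [right|]; lra. }
    destruct hc as [c [hc1 hc2]].
    assert (hm : Rmin 0 1 = 0) by (apply Rmin_left; lra).
    assert (hM : Rmax 0 1 = 1) by (apply Rmax_right; lra).
    unfold hyp_length.
    rewrite (RInt_ext (V:=R_CompleteNormedModule) _ (fun t => rhof (a*(1-t)) * Rabs a)).
    2:{ intros t _. rewrite Dline, Derive_const. change (rho_S (a*(1-t), 0)) with (rhof (a*(1-t))).
        f_equal. rewrite <- sqrt_Rsqr_abs. f_equal. unfold Rsqr. ring. }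
    assert (hI : is_RInt (fun t => rhof (a*(1-t)) * Rabs a) 0 1
                   (minus ((fun t => c * H (a*(1-t))) 1) ((fun t => c * H (a*(1-t))) 0))).
    { apply (is_RInt_derive (V:=R_CompleteNormedModule) (fun t => c * H (a*(1-t)))); rewrite hm, hM.
      - intros t ht.
        assert (hg : is_derive (fun t => a*(1-t)) t (-a)) by (auto_derive; auto; ring).
        assert (hd := is_derive_comp H (fun t => a*(1-t)) t _ _ (H_deriv _ (hst t ht)) hg).
        assert (hd2 := is_derive_scal _ t c _ hd).
        replace (rhof (a*(1-t)) * Rabs a) with (c * scal (-a) (rhof (a*(1-t)))). exact hd2.
        unfold scal; simpl; unfold mult; simpl. rewrite <- hc2. ring.
      - intros t ht. apply (continuous_mult (K:=R_AbsRing) (fun t => rhof (a*(1-t))) (fun _ => Rabs a)).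
        + apply (cont_smooth rhof (fun t => a*(1-t))). apply (ex_derive_continuous (K:=R_AbsRing) (V:=R_NormedModule)). auto_derive; auto.
          unfold rhof. pose proof (cos_pos _ (hst t ht)). auto_derive. lra.
        + apply continuous_const. }
    rewrite (is_RInt_unique _ _ _ _ hI). unfold minus, plus, opp; simpl.
    replace (a*(1-1)) with 0 by ring. replace (a*(1-0)) with a by ring. rewrite H0.
    destruct hc1; subst c; unfold Rabs; destruct Rcase_abs; lra.
Qed.

Theorem lemma1 (r : R) (hr : 0 < r < 1) :
  (forall z : R * R, closed_disc_S (lambda r) z ->
     - (4 / PI) * atan r <= ReP z <= (4 / PI) * atan r /\
     - (2 / PI) * lambda r <= ImP z <= (2 / PI) * lambda r) /\
  (forall a : R,
     (exists z : R * R, closed_disc_S (lambda r) z /\ ReP z = a) <->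
     - (4 / PI) * atan r <= a <= (4 / PI) * atan r).
Proof.
  pose proof PI_RGT_0 as hpi.
  assert (P1 : forall z : R * R, closed_disc_S (lambda r) z ->
     - (4 / PI) * atan r <= ReP z <= (4 / PI) * atan r /\
     - (2 / PI) * lambda r <= ImP z <= (2 / PI) * lambda r).
  { intros z hz. destruct (part1 r hr z hz) as [h1 h2]. destruct hz as [hs _].
    split.
    - apply (abs_H_le (ReP z) r hs hr). exact h1.
    - assert (H0 : Rabs (ImP z) <= 2/PI * lambda r).
      { replace (Rabs (ImP z)) with (2/PI * (PI/2 * Rabs (ImP z))) by (field; lra).
        apply Rmult_le_compat_l; [apply Rlt_le, Rdiv_lt_0_compat; lra | exact h2]. }
      unfold Rabs in H0; destruct Rcase_abs; split; lra. }
  split; [exact P1|].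
  intros a. split.
  - intros [z [hz e]]. subst a. apply (P1 z hz).
  - intros hab. pose proof (x0_lt1 r hr).
    assert (ha : -1 < a < 1) by lra.
    destruct (line_length a ha) as [hadm hlen].
    exists (a, 0). split; [|reflexivity].
    split; [unfold in_strip, ReP; simpl; lra|].
    unfold d_S.
    destruct (Glb_Rbar_correct (fun L => exists gx gy, admissible_curve gx gy (a,0) (0,0) /\ L = hyp_length gx gy)) as [hl _].
    assert (hb := hl _ (ex_intro _ _ (ex_intro _ _ (conj hadm eq_refl)))).
    apply (Rbar_le_trans _ _ _ hb). simpl.
    apply Rle_trans with (1 := hlen). apply (abs_H_le a r ha hr). exact hab.
Qed.
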